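(* Let $n\ge 1$ and assume all matrices $\Lambda_{k-1}$ ($0\le k\le n+1$) and all elements $H_k,\tau_k$ ($0\le k\le n+1$) below are invertible. Then the monic noncommutative Laurent biorthogonal polynomials satisfy the three-term recurrence relation $$\lambda\big(P_n(\lambda)+a_nP_{n-1}(\lambda)\big)=P_{n+1}(\lambda)+b_nP_n(\lambda),$$ where $$a_n=-\tau_n\tau_{n-1}^{-1},\qquad b_n=a_nH_{n-1}H_n^{-1}.$$
   Context: Let $R$ be a skew field containing elements $m_i$, $i\in\mathbb Z$ (the moments), and equipped with an involution $a\mapsto a^*$ (an anti-automorphism of order two). For polynomials / formal Laurent series in a commuting indeterminate $\lambda$ with coefficients in $R$, extend the involution by $(\sum_i a_i\lambda^i)^*=\sum_i a_i^*\lambda^{-i}$. Define the pairing $$\Big\langle \sum_i a_i\lambda^i,\sum_j b_j\lambda^j\Big\rangle=\sum_{i,j}a_i\,m_{i-j}\,b_j^*.$$ It is left $R$-linear in the first argument, satisfies $\langle p,\beta q\rangle=\langle p,q\rangle\beta^*$, and $\langle\lambda p,q\rangle=\langle p,\lambda^{-1}q\rangle$. For $n\ge 0$, let $\Lambda_{n-1}=(m_{i-j})_{i,j=0}^{n-1}$, an $n\times n$ matrix over $R$, assumed invertible. The empty matrix is used for $n=0$. Let $\theta_n=(m_n,m_{n-1},\dots,m_1)$ be a row vector. The monic Laurent biorthogonal polynomials are $$P_n(\lambda)=\lambda^n-\theta_n\Lambda_{n-1}^{-1}(1,\lambda,\dots,\lambda^{n-1})^T,$$ with $P_0=1$. Equivalently,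 $P_n$ is the unique monic polynomial of degree $n$ with $\langle P_n,\lambda^j\rangle=0$ for $0\le j\le n-1$. The companion family $Q_n$ consists of monic polynomials of degree $n$ with $$\langle P_n,Q_m\rangle=H_n\delta_{nm}.$$ Here $$H_n=m_0-\theta_n\Lambda_{n-1}^{-1}(m_{-n},m_{-n+1},\dots,m_{-1})^T,$$ so that $H_0=m_0$, and $$\tau_n=m_{n+1}-\theta_n\Lambda_{n-1}^{-1}(m_1,m_2,\dots,m_n)^T,$$ so that $\tau_0=m_1$. (These are the quasideterminants of the corresponding bordered $(n+1)\times(n+1)$ moment matrices with boxed bottom-right entry; in particular $\tau_n=\langle P_n,\lambda^{-1}\rangle$.) *)

(* Defs.v *)
From HB Require Import structures.
From mathcomp Require Import all_boot all_order all_algebra.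
Set Implicit Arguments. Unset Strict Implicit. Unset Printing Implicit Defensive.
Import Order.TTheory GRing.Theory Num.Theory.
Local Open Scope ring_scope.

(* R : unitRingType (possibly noncommutative); moments m : int -> R.
   Linv k is (a two-sided inverse of) Lambda_{k-1}, a k x k matrix. *)
Section LBP.
Variable R : unitRingType.
Variable m : int -> R.
Variable Linv : forall k : nat, 'M[R]_k.

Definition Lambda (n : nat) : 'M[R]_n := \matrix_(i < n, j < n) m (i%:Z - j%:Z).

Definition theta (n : nat) : 'rV[R]_n := \row_(j < n) m (n%:Z - j%:Z).

Definition coefrow (n : nat) : 'rV[R]_n := theta n *m Linv n.

Definition colH (n : nat) : 'cV[R]_n := \col_(i < n) m (i%:Z - n%:Z).
Definition colT (n : nat) : 'cV[R]_n := \col_(i < n) m (i%:Z + 1).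

Definition Hn (n : nat) : R := m 0 - (coefrow n *m colH n) 0 0.
Definition taun (n : nat) : R := m (n%:Z + 1) - (coefrow n *m colT n) 0 0.

Definition Pn (n : nat) : {poly R} :=
  'X^n - \sum_(j < n) (coefrow n 0 j)%:P * 'X^j.
End LBP.

Definition is_inverse_mx (R : pzRingType) (k : nat) (A B : 'M[R]_k) : Prop :=
  A *m B = 1%:M /\ B *m A = 1%:M.

(* Main.v *)
Require Import Defs.
From HB Require Import structures.
From mathcomp Require Import all_boot all_order all_algebra.
From mathcomp Require Import zify.
Import GRing.Theory.
Local Open Scope ring_scope.
Set Implicit Arguments. Unset Strict Implicit.

Section Aux.
Variable R : unitRingType.
Variable m : int -> R.
Variable Linv : forall k : nat, 'M[R]_k.

Definition LL (N : nat) (p : {poly R}) (k : int) : R :=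
  \sum_(i < N) p`_i * m (i%:Z - k).
Definition FF (j : nat) (k : int) : R :=
  m (j%:Z - k) - \sum_(i < j) coefrow m Linv j 0 i * m (i%:Z - k).

Lemma LD N p q k : LL N (p + q) k = LL N p k + LL N q k.
Proof. rewrite /LL -big_split /=; apply: eq_bigr => i _; by rewrite coefD mulrDl. Qed.
Lemma LN N p k : LL N (- p) k = - LL N p k.
Proof. rewrite /LL -sumrN; apply: eq_bigr => i _; by rewrite coefN mulNr. Qed.
Lemma LB N p q k : LL N (p - q) k = LL N p k - LL N q k.
Proof. by rewrite LD LN. Qed.
Lemma LC N c p k : LL N (c%:P * p) k = c * LL N p k.
Proof. rewrite /LL mulr_sumr; apply: eq_bigr => i _; by rewrite coefCM mulrA. Qed.
Lemma Lsum N j (G : 'I_j -> {poly R}) k :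
  LL N (\sum_(i < j) G i) k = \sum_(i < j) LL N (G i) k.
Proof. rewrite /LL exchange_big /=; apply: eq_bigr => i _; by rewrite coef_sum mulr_suml. Qed.
Lemma LX N j k : (j < N)%N -> LL N 'X^j k = m (j%:Z - k).
Proof.
move=> hj; rewrite /LL (bigD1 (Ordinal hj)) //= coefXn eqxx mul1r big1 ?addr0 //.
move=> i hi; rewrite coefXn.
have -> : (nat_of_ord i == j) = false.
  apply/negbTE; move: hi; apply: contra => /eqP h; apply/eqP/val_inj; exact: h.
by rewrite mul0r.
Qed.

Lemma LP N j k : (j < N)%N -> LL N (Pn m Linv j) k = FF j k.
Proof.
move=> hj; rewrite /Pn LB LX // Lsum /FF; congr (_ - _); apply: eq_bigr => i _.
by rewrite LC LX // (ltn_trans (ltn_ord i) hj).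
Qed.

Lemma XPn j : 'X * Pn m Linv j =
  'X^(j.+1) - \sum_(i < j) (coefrow m Linv j 0 i)%:P * 'X^(i.+1).
Proof.
rewrite /Pn mulrBr -exprS mulr_sumr; congr (_ - _); apply: eq_bigr => i _.
by rewrite mulrA -commr_polyX -mulrA -exprS.
Qed.

Lemma LXP N j k : (j.+1 < N)%N -> LL N ('X * Pn m Linv j) k = FF j (k - 1).
Proof.
move=> hj; rewrite XPn LB LX // Lsum /FF; congr (_ - _).
  by congr m; lia.
apply: eq_bigr => i _; rewrite LC LX; first by congr (_ * m _); lia.
by apply: leq_ltn_trans hj; rewrite ltnS; apply: ltnW.
Qed.

Lemma Forth j (k : nat) : Linv j *m Lambda m j = 1%:M -> (k < j)%N -> FF j k = 0.
Proof.
move=> hinv hk.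
have E : (coefrow m Linv j *m Lambda m j) 0 (Ordinal hk) = theta m j 0 (Ordinal hk).
  by rewrite /coefrow -mulmxA hinv mulmx1.
rewrite mxE [in RHS]mxE /= in E.
rewrite /FF -E; apply/eqP; rewrite subr_eq0; apply/eqP; apply: eq_bigr => i _; by rewrite ?mxE.
Qed.

Lemma HF j : Hn m Linv j = FF j j.
Proof.
rewrite /Hn /FF subrr mxE; congr (_ - _); apply: eq_bigr => i _; by rewrite !mxE.
Qed.

Lemma TF j : taun m Linv j = FF j (-1).
Proof.
rewrite /taun /FF opprK mxE; congr (_ - _); apply: eq_bigr => i _; by rewrite !mxE ?opprK.
Qed.

Lemma PnHigh j i : (j <= i)%N -> (Pn m Linv j)`_i = (i == j)%:R.
Proof.
move=> hji; rewrite /Pn coefB coefXn coef_sum big1 ?subr0 // => l _.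
rewrite coefCM coefXn.
have -> : (i == nat_of_ord l) = false.
  by apply/negbTE; rewrite neq_ltn (leq_trans (ltn_ord l) hji) orbT.
by rewrite mulr0.
Qed.
End Aux.

Theorem proposition1
  (R : unitRingType)
  (* R is a skew field *)
  (hskew : forall x : R, x != 0 -> x \is a GRing.unit)
  (* an involution (anti-automorphism of order two) *)
  (star : R -> R)
  (star_add : forall x y : R, star (x + y) = star x + star y)
  (star_mul : forall x y : R, star (x * y) = star y * star x)
  (star_one : star 1 = 1)
  (star_inv : forall x : R, star (star x) = x)
  (m : int -> R)
  (Linv : forall k : nat, 'M[R]_k)
  (n : nat) (hn : (1 <= n)%N)
  (hL : forall k : nat, (k <= n.+1)%N -> is_inverse_mx (Lambda m k) (Linv k))
  (hH : forall k : nat, (k <= n.+1)%N -> Hn m Linv k \is a GRing.unit)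
  (hT : forall k : nat, (k <= n.+1)%N -> taun m Linv k \is a GRing.unit) :
  let a := - (taun m Linv n * (taun m Linv n.-1)^-1) in
  let b := a * Hn m Linv n.-1 * (Hn m Linv n)^-1 in
  'X * (Pn m Linv n + a%:P * Pn m Linv n.-1)
    = Pn m Linv n.+1 + b%:P * Pn m Linv n.
Proof.
case: n hn hL hH hT => [|n] // _ hL hH hT a b.
have hi k : (k <= n.+2)%N -> Linv k *m Lambda m k = 1%:M.
  by move=> h; case: (hL k h).
apply/eqP; rewrite -subr_eq0; apply/eqP.
set Q := _ - _.
have hQ : Q = 'X * Pn m Linv n.+1 + a%:P * ('X * Pn m Linv n)
              - (Pn m Linv n.+2 + b%:P * Pn m Linv n.+1).
  by rewrite /Q /= mulrDr (mulrA 'X) -(commr_polyX a%:P) -mulrA.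
have hQpair : forall k : 'I_(n.+2), LL m n.+3 Q k = 0.
  move=> k; rewrite hQ LB (LD _ _ ('X * _)) (LD _ _ (Pn _ _ _)) !LC LXP // LXP // LP // LP //.
  have Z j (k0 : nat) : (k0 < j)%N -> (j <= n.+2)%N -> FF m Linv j k0 = 0.
    by move=> h1 h2; apply: Forth (hi _ h2) h1.
  case: k => [[|k] hk] /=.
    rewrite sub0r -!TF (Z n.+2 0%N) ?(Z n.+1 0%N) //.
    rewrite /a mulNr mulrVK; last by apply: hT; lia.
    by rewrite mulr0 addr0 subr0 subrr.
  have -> : ((k.+1)%:Z - 1 = k%:Z)%R by lia.
  case: (ltnP k n) => hkn.
    rewrite (Z n.+1 k) ?(Z n k) ?(Z n.+2 k.+1) ?(Z n.+1 k.+1) //; try lia.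
    by rewrite !mulr0 !addr0 subrr.
  have ek : k = n by lia.
  subst k.
  rewrite (Z n.+1 n) ?(Z n.+2 n.+1) // -!HF /b mulrVK; last by apply: hH; lia.
  by rewrite ?add0r; apply: subrr.
have hhigh : forall i, (n.+2 <= i)%N -> Q`_i = 0.
  move=> [|i] // hni.
  rewrite hQ coefB (coefD ('X * _)) (coefD (Pn _ _ _)) !coefCM !coefXM.
  rewrite (PnHigh _ _ (j := n.+1) (i := i)) ?(PnHigh _ _ (j := n) (i := i))
    ?(PnHigh _ _ (j := n.+2) (i := i.+1)) ?(PnHigh _ _ (j := n.+1) (i := i.+1)); try lia.
  have -> : (i == n) = false by apply/eqP; lia.
  have -> : (i.+1 == n.+1) = false by apply/eqP; lia.
  rewrite /= eqSS !mulr0 !addr0; apply: subrr.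
set q := \row_(i < n.+2) Q`_i.
have hq : q *m Lambda m n.+2 = 0.
  apply/matrixP => i k; rewrite !mxE.
  under eq_bigr => l _ do rewrite !mxE.
  rewrite -[RHS](hQpair k) /LL [RHS]big_ord_recr /= hhigh // mul0r addr0.
  by apply: eq_bigr => l _.
have hq0 : q = 0.
  have [h1 _] := hL n.+2 (leqnn _).
  by rewrite -[q]mulmx1 -h1 mulmxA hq mul0mx.
apply/polyP => i; rewrite coef0; case: (ltnP i n.+2) => hin; last exact: hhigh.
have := congr1 (fun M : 'rV[R]_(n.+2) => M 0 (Ordinal hin)) hq0.
by rewrite !mxE.
Qed.
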